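(* Let $\mathbf A=(\mathbf a_1,\ldots,\mathbf a_m)^\top\in\mathbb R^{m\times d}$ and $\mathbf b\in\mathbb R^m$. If $m\le 2d-1$, then $(\mathbf A,\mathbf b)$ is not affine phase retrievable for $\mathbb R^d$.
   Context: $(\mathbf A,\mathbf b)$ is called affine phase retrievable for $\mathbb R^d$ if the map $\mathbf x\mapsto(|\langle\mathbf a_1,\mathbf x\rangle+b_1|,\ldots,|\langle\mathbf a_m,\mathbf x\rangle+b_m|)$ is injective on $\mathbb R^d$, where $\mathbf b=(b_1,\ldots,b_m)^\top$. *)

(* Defs.v *)
From mathcomp Require Import all_boot all_order all_algebra.
Set Implicit Arguments. Unset Strict Implicit. Unset Printing Implicit Defensive.
Import Order.TTheory GRing.Theory Num.Theory.
Local Open Scope ring_scope.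

Definition affine_phase_map (R : numDomainType) (m d : nat)
  (A : 'M[R]_(m, d)) (b : 'cV[R]_m) (x : 'cV[R]_d) : 'cV[R]_m :=
  \col_i `|(A *m x) i 0 + b i 0|.

Definition affine_phase_retrievable (R : numDomainType) (m d : nat)
  (A : 'M[R]_(m, d)) (b : 'cV[R]_m) : Prop :=
  injective (affine_phase_map A b).

(* Main.v *)
Require Import Defs.
From mathcomp Require Import all_boot all_order all_algebra.
From mathcomp Require Import reals.
From mathcomp Require Import lra zify.
Import Order.TTheory GRing.Theory Num.Theory.
Local Open Scope ring_scope.

Theorem theorem2p2 (R : realType) (m d : nat)
  (A : 'M[R]_(m, d)) (b : 'cV[R]_m) :
  (m < 2 * d)%N -> ~ affine_phase_retrievable A b.
Proof.
move=> hm inj.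
pose r := \rank A.
pose f := fun k : 'I_r => maxrankfun A k.
have finj : injective f by move=> x y /maxrankfun_inj.
have rkB : \rank (rowsub f A) = r.
  apply/eqP; have := maxrowsub_free A.
  by rewrite /row_free (_ : rowsub f A = rowsub (maxrankfun A) A) //; apply/matrixP => i j; rewrite !mxE.
pose Bt := (rowsub f A)^T.
have fullBt : row_full Bt by rewrite /row_full mxrank_tr rkB.
pose c : 'rV[R]_r := \row_k (- b (f k) 0).
have [z hz] : exists z : 'rV[R]_d, c = z *m Bt.
  by apply/submxP; apply: submx_full.
pose w := z^T.
have hw : forall k, (A *m w) (f k) 0 + b (f k) 0 = 0.
  move=> k; have := congr1 (fun M : 'rV[R]_r => M 0 k) hz; rewrite !mxE => HH.
  have -> : \sum_j A (f k) j * w j 0 = - b (f k) 0.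
    by rewrite HH; apply: eq_bigr => j _; rewrite !mxE mulrC.
  by rewrite addNr.
pose S := [pred i : 'I_m | i \notin codom f].
pose g := fun k : 'I_#|S| => enum_val k.
pose Cg := rowsub g A.
have cardS : (#|S| + r)%N = m.
  have := cardC (mem (codom f)).
  rewrite card_codom // !card_ord => H.
  rewrite -[X in _ = X]H addnC; congr addn.
have rkC : (\rank Cg < d)%N.
  have h1 := rank_leq_row Cg.
  have h2 : (\rank Cg <= r)%N by rewrite /Cg rowsubE mxrankM_maxr.
  lia.
pose Mt := Cg^T.
pose K := kermx Mt.
have K0 : K != 0.
  rewrite -mxrank_eq0 /K mxrank_ker /Mt mxrank_tr; lia.
have [i0 hi0] : exists i0, row i0 K != 0.
  apply/existsP; apply: contraR K0 => /existsPn H; apply/eqP/row_matrixP => i.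
  by have := H i; rewrite negbK row0 => /eqP.
pose u := (row i0 K)^T.
have hu0 : u != 0 by rewrite /u -(inj_eq (@trmx_inj _ _ _)) trmxK trmx0.
have hKu : row i0 K *m Mt = 0 by rewrite -row_mul mulmx_ker row0.
have hu : forall i, i \in S -> (A *m u) i 0 = 0.
  move=> i iS.
  have := congr1 (fun M : 'rV[R]_#|S| => M 0 (enum_rank_in iS i)) hKu.
  rewrite !mxE => H; rewrite -[RHS]H; apply: eq_bigr => j _.
  by rewrite !mxE /g enum_rankK_in // mulrC.
have eqmap : affine_phase_map A b (w + u) = affine_phase_map A b (w - u).
  have k1 : forall i, (A *m (w + u)) i 0 = (A *m w) i 0 + (A *m u) i 0.
    by move=> i; rewrite mulmxDr mxE.
  have k2 : forall i, (A *m (w - u)) i 0 = (A *m w) i 0 - (A *m u) i 0.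
    by move=> i; rewrite mulmxDr mulmxN !mxE.
  apply/matrixP => i j; rewrite /affine_phase_map [LHS]mxE [RHS]mxE k1 k2.
  have [iS|iT] := boolP (i \in S).
    by rewrite hu // oppr0 !addr0.
  move: iT; rewrite inE negbK => /codomP [k ->].
  have := hw k; move: ((A *m w) (f k) 0) ((A *m u) (f k) 0) (b (f k) 0) => P Q B hPB.
  have -> : P = - B by apply/eqP; rewrite -addr_eq0 hPB.
  by rewrite addrAC addNr add0r addrAC addNr add0r normrN.
have := inj _ _ eqmap => /(congr1 (fun M => M - w)).
rewrite addrC addKr (addrC w) addrK => ueq.
clearbody u. move/eqP: hu0; apply; apply/matrixP => i j.
have := congr1 (fun M : 'cV[R]_d => M i j) ueq; rewrite !mxE => h; lra.
Qed.
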